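(* Let $\mathbb{S}$ be a collection of $n$ subsets of $\{1,\dots,m\}$ with $n>m$, each $\mathcal{J}\in\mathbb{S}$ of size $l$. Then $$\max_{\mathcal{J},\mathcal{J}'\in\mathbb{S},\,\mathcal{J}\ne\mathcal{J}'}|\mathcal{J}\cap\mathcal{J}'|\ \ge\ \frac{l^2}{m}.$$ Moreover, if $n=2(m-1)$ and equality holds in this bound, then $\mathbb{S}$ can be partitioned into $m-1$ pairs, each pair consisting of two disjoint subsets of size $m/2$. *)

(* Defs.v *)
From mathcomp Require Import all_boot all_order all_algebra.
Set Implicit Arguments. Unset Strict Implicit. Unset Printing Implicit Defensive.

(* Maximal pairwise intersection size over distinct members of S
   (0 if S has fewer than two members). Ground set {1..m} is 'I_m. *)
Definition max_inter (m : nat) (S : {set {set 'I_m}}) : nat :=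
  \max_(J in S) \max_(J' in S | J' != J) #|J :&: J'|.

(* Main.v *)
Require Import Defs.
From mathcomp Require Import all_boot all_order all_algebra.
From mathcomp Require Import ring lra zify.
Import Order.TTheory GRing.Theory Num.Theory.
Local Open Scope ring_scope.
Set Implicit Arguments. Unset Strict Implicit. Unset Printing Implicit Defensive.

Definition dot m (a b : 'rV[rat]_m) : rat := \sum_j a 0 j * b 0 j.

Lemma dotC m (a b : 'rV[rat]_m) : dot a b = dot b a.
Proof. by apply: eq_bigr => j _; rewrite mulrC. Qed.
Lemma dotBl m (a b c : 'rV[rat]_m) : dot (a - b) c = dot a c - dot b c.
Proof. rewrite /dot -sumrB; apply: eq_bigr => j _; by rewrite !mxE mulrBl. Qed.
Lemma dotZl m k (a c : 'rV[rat]_m) : dot (k *: a) c = k * dot a c.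
Proof. rewrite /dot big_distrr; apply: eq_bigr => j _. rewrite !mxE; exact: esym (mulrA _ _ _). Qed.
Lemma dotNl m (a c : 'rV[rat]_m) : dot (- a) c = - dot a c.
Proof. rewrite /dot -sumrN; apply: eq_bigr => j _; by rewrite !mxE mulNr. Qed.
Lemma dotBr m (a b c : 'rV[rat]_m) : dot c (a - b) = dot c a - dot c b.
Proof. by rewrite dotC dotBl (dotC a) (dotC b). Qed.
Lemma dotZr m k (a c : 'rV[rat]_m) : dot c (k *: a) = k * dot c a.
Proof. by rewrite dotC dotZl dotC. Qed.

Lemma dot_proj m (a b c : 'rV[rat]_m) :
  dot (dot b b *: a - dot a b *: b) (dot b b *: c - dot c b *: b) =
  dot b b * (dot b b * dot a c - dot a b * dot c b).
Proof.
rewrite !(dotBl, dotBr, dotZl, dotZr) (dotC b c); ring.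
Qed.

Lemma sum_swap k m (f : 'I_m -> rat) (c : 'I_k -> rat) (v : 'I_k -> 'rV[rat]_m) :
  \sum_j f j * (\sum_p c p * v p 0 j) = \sum_p c p * \sum_j f j * v p 0 j.
Proof.
under eq_bigr do rewrite big_distrr.
rewrite exchange_big; apply: eq_bigr => p _; rewrite big_distrr.
by apply: eq_bigr => j _ /=; rewrite mulrCA.
Qed.

Lemma indep_ord k m (v : 'I_k -> 'rV[rat]_m) (x : 'rV[rat]_m) :
  (forall p q, p != q -> dot (v p) (v q) <= 0) ->
  (forall p, 0 < dot x (v p)) ->
  forall a : 'rV[rat]_k, a *m (\matrix_p v p) = 0 -> a = 0.
Proof.
move=> hneg hpos a ha.
have hj : forall j, \sum_p a 0 p * v p 0 j = 0.
  move=> j; transitivity ((a *m \matrix_p v p) 0 j); last by rewrite ha mxE.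
  by rewrite mxE; apply: eq_bigr => p _; rewrite mxE.
pose ap p := if 0 <= a 0 p then a 0 p else 0.
pose an p := if 0 <= a 0 p then 0 else - a 0 p.
have hap : forall p, 0 <= ap p by move=> p; rewrite /ap; case: ifP => // /negbT; lra.
have han : forall p, 0 <= an p by move=> p; rewrite /an; case: ifP => // /negbT; lra.
have hapn : forall p, ap p * an p = 0 by move=> p; rewrite /ap /an; case: ifP => _; rewrite ?mulr0 ?mul0r.
have hsplit : forall p, a 0 p = ap p - an p.
  by move=> p; rewrite /ap /an; case: ifP => _; rewrite ?subr0 ?sub0r ?opprK.
pose y j := \sum_p ap p * v p 0 j.
have hy : forall j, y j = \sum_p an p * v p 0 j.
  move=> j; apply/eqP; rewrite -subr_eq0 /y -sumrB; apply/eqP.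
  transitivity (\sum_p a 0 p * v p 0 j); last exact: hj.
  by apply: eq_bigr => p _; rewrite -mulrBl hsplit.
have hyy : \sum_j y j * y j = \sum_p \sum_q ap p * an q * dot (v p) (v q).
  transitivity (\sum_j (\sum_q an q * v q 0 j) * y j).
    by apply: eq_bigr => j _; rewrite mulrC hy.
  rewrite sum_swap; apply: eq_bigr => p _.
  under eq_bigr do rewrite mulrC.
  rewrite sum_swap big_distrr; apply: eq_bigr => q _ /=.
  by rewrite mulrA /dot.
have hy0 : forall j, y j = 0.
  have hle : \sum_j y j * y j <= 0.
    rewrite hyy; apply: sumr_le0 => p _; apply: sumr_le0 => q _.
    have [->|hpq] := eqVneq p q; first by rewrite hapn mul0r.
    by apply: mulr_ge0_le0; [apply: mulr_ge0 | apply: hneg].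
  have hge : forall j, 0 <= y j * y j by move=> j; rewrite -expr2 sqr_ge0.
  have h0 : \sum_j y j * y j = 0.
    by apply/eqP; rewrite eq_le hle sumr_ge0.
  move=> j; have := psumr_eq0P (fun j _ => hge j) h0 (i:=j) isT.
  by move/eqP; rewrite mulf_eq0 orbb => /eqP.
have hx1 : \sum_p ap p * dot x (v p) = 0.
  rewrite -sum_swap /dot; apply: big1 => j _.
  by rewrite -/(y j) hy0 mulr0.
have hx2 : \sum_p an p * dot x (v p) = 0.
  rewrite -sum_swap /dot; apply: big1 => j _.
  by rewrite -hy hy0 mulr0.
have hz : forall (c : 'I_k -> rat), (forall p, 0 <= c p) ->
    \sum_p c p * dot x (v p) = 0 -> forall p, c p = 0.
  move=> c hc hs p.
  have hge : forall p, 0 <= c p * dot x (v p).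
    by move=> q; apply: mulr_ge0 => //; apply: ltW.
  have := psumr_eq0P (fun q _ => hge q) hs (i:=p) isT.
  move/eqP; rewrite mulf_eq0 => /orP [/eqP //|]; by rewrite gt_eqF.
apply/rowP => p; by rewrite mxE hsplit (hz _ hap hx1) (hz _ han hx2) subr0.
Qed.

Lemma rowfree_of k m (M : 'M[rat]_(k, m)) :
  (forall a : 'rV[rat]_k, a *m M = 0 -> a = 0) -> row_free M.
Proof.
move=> H; rewrite -kermx_eq0; apply/eqP/row_matrixP => i; rewrite row0.
by apply: H; rewrite -row_mul mulmx_ker row0.
Qed.

Lemma core_count (I : finType) m (A : {set I}) (u : I -> 'rV[rat]_m)
  (x : 'rV[rat]_m) c (C : 'M[rat]_(m, c)) :
  (forall i j, i \in A -> j \in A -> i != j -> dot (u i) (u j) <= 0) ->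
  (forall i, i \in A -> 0 < dot x (u i)) ->
  (forall i, i \in A -> u i *m C = 0) ->
  (#|A| + \rank C <= m)%N.
Proof.
move=> hneg hpos hC.
pose M := \matrix_(p < #|A|) u (enum_val p).
have hf : row_free M.
  apply: rowfree_of; apply: (@indep_ord _ _ (fun p => u (enum_val p)) x).
  - move=> p q hpq; apply: hneg; rewrite ?enum_valP //.
    by apply: contra hpq => /eqP /enum_val_inj ->.
  - by move=> p; apply: hpos; rewrite enum_valP.
have hMC : M *m C = 0.
  by apply/row_matrixP => p; rewrite row_mul rowK row0 (hC _ (enum_valP p)).
have := mxrank_mul_min M C; rewrite hMC mxrank0 (eqP hf).
by rewrite leqn0 subn_eq0.
Qed.

Lemma generic (I : finType) m (A : {set I}) (u : I -> 'rV[rat]_m) :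
  (forall i, i \in A -> u i != 0) ->
  exists x : 'rV[rat]_m, forall i, i \in A -> dot x (u i) != 0.
Proof.
case: m u => [|m] u hnz.
  exists 0 => i hi; have := hnz i hi; by rewrite (thinmx0 (u i)) eqxx.
pose pol i := \poly_(j < m.+1) u i 0 (inord j).
have hpol : forall i, i \in A -> pol i != 0.
  move=> i hi; apply: contra (hnz i hi) => /eqP hp; apply/eqP/rowP => j.
  have := congr1 (fun q : {poly rat} => q`_j) hp.
  by rewrite coef_poly ltn_ord inord_val coef0 mxE.
pose F := \prod_(i in A) pol i.
have hF : F != 0 by apply/prodf_neq0.
pose rs := [seq (j%:R : rat) | j <- iota 0 (size F)].
have : ~~ all (root F) rs.
  apply/negP => hall.
  have hu : uniq rs.
    rewrite map_inj_uniq ?iota_uniq // => a b /eqP; rewrite eqr_nat => /eqP.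
    done.
  have := max_poly_roots hF hall hu.
  by rewrite size_map size_iota ltnn.
case/allPn => t _ ht.
exists (\row_(j < m.+1) t ^+ j) => i hi.
have : (pol i).[t] != 0.
  apply: contra ht => /eqP h0; rewrite /root /F horner_prod.
  by rewrite (bigD1 i) //= h0 mul0r.
have -> : (pol i).[t] = dot (\row_(j < m.+1) t ^+ j) (u i).
  rewrite horner_poly /dot.
  by apply: eq_bigr => j _; rewrite inord_val mxE mulrC.
by [].
Qed.

Lemma bound2 (I : finType) m (A : {set I}) (u : I -> 'rV[rat]_m)
  c (C : 'M[rat]_(m, c)) :
  (forall i, i \in A -> u i != 0) ->
  (forall i j, i \in A -> j \in A -> i != j -> dot (u i) (u j) <= 0) ->
  (forall i, i \in A -> u i *m C = 0) ->
  (#|A| + 2 * \rank C <= 2 * m)%N.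
Proof.
move=> hnz hneg hC.
have [x hx] := generic hnz.
pose B := [set i | 0 < dot x (u i)].
have h1 : (#|A :&: B| + \rank C <= m)%N.
  apply: (core_count (x := x)).
  - by move=> i j /setIP [hi _] /setIP [hj _]; apply: hneg.
  - by move=> i /setIP [_]; rewrite inE.
  - by move=> i /setIP [hi _]; apply: hC.
have h2 : (#|A :\: B| + \rank C <= m)%N.
  apply: (core_count (x := - x)).
  - by move=> i j /setDP [hi _] /setDP [hj _]; apply: hneg.
  - move=> i /setDP [hi]; rewrite inE dotNl oppr_gt0 => hn.
    by rewrite lt_neqAle hx // andTb leNgt.
  - by move=> i /setDP [hi _]; apply: hC.
have := cardsID B A; lia.
Qed.

Definition wv m (l : nat) (J : {set 'I_m}) : 'rV[rat]_m :=
  \row_j (m%:R * (j \in J)%:R - l%:R).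

Lemma sum_ind m (J : {set 'I_m}) : \sum_j ((j \in J)%:R : rat) = #|J|%:R.
Proof.
rewrite -sum1_card natr_sum [RHS]big_mkcond; apply: eq_bigr => j _.
by case: (j \in J).
Qed.

Lemma sum_cst m (c : rat) : \sum_(j < m) c = m%:R * c.
Proof. by rewrite sumr_const card_ord mulr_natl. Qed.

Lemma dot_w m l (J K : {set 'I_m}) : #|J| = l -> #|K| = l ->
  dot (wv l J) (wv l K) = m%:R * (m%:R * #|J :&: K|%:R - (l ^ 2)%N%:R).
Proof.
move=> hJ hK; rewrite /dot.
have e : forall j, (wv l J) 0 j * (wv l K) 0 j =
   m%:R * m%:R * (j \in J :&: K)%:R - m%:R * l%:R * (j \in J)%:R
   - m%:R * l%:R * (j \in K)%:R + l%:R * l%:R.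
  move=> j; rewrite !mxE inE; case: (j \in J); case: (j \in K); rewrite /=; ring.
under eq_bigr do rewrite e.
rewrite big_split /= !sumrB -!big_distrr /= !sum_ind sum_cst hJ hK natrX; ring.
Qed.

Lemma sum_w m l (J : {set 'I_m}) : #|J| = l -> \sum_j (wv l J) 0 j = 0.
Proof.
move=> hJ; under eq_bigr do rewrite mxE.
by rewrite sumrB -big_distrr /= sum_ind sum_cst hJ subrr.
Qed.

Lemma sumvB m (a b : 'rV[rat]_m) :
  \sum_j (a - b) 0 j = \sum_j a 0 j - \sum_j b 0 j.
Proof. by rewrite -sumrB; apply: eq_bigr => j _; rewrite !mxE. Qed.
Lemma sumvZ m k (a : 'rV[rat]_m) : \sum_j (k *: a) 0 j = k * \sum_j a 0 j.
Proof. by rewrite big_distrr; apply: eq_bigr => j _; rewrite !mxE. Qed.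

Lemma key1 (A P M L : rat) : 0 < A -> P <= 0 -> L < M -> A * (M - L) = P * (M - L) -> False.
Proof. move=> *; nra. Qed.
Lemma key2 (A P L : rat) : 0 < A -> P <= 0 -> 0 < L -> A * (- L) = P * (- L) -> False.
Proof. move=> *; nra. Qed.

Unset Implicit Arguments.
Theorem corollary3p9 (m n l : nat) (S : {set {set 'I_m}})
  (hcard : #|S| = n) (hnm : (m < n)%N)
  (hsize : forall J, J \in S -> #|J| = l) :
  ((l ^ 2)%N%:R / m%:R <= (max_inter S)%:R :> rat) /\
  ((n = 2 * (m - 1))%N ->
   ((max_inter S)%:R = (l ^ 2)%N%:R / m%:R :> rat) ->
   exists P : {set {set {set 'I_m}}},
     partition P S /\ #|P| = (m - 1)%N /\
     forall p, p \in P ->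
       exists J J', p = [set J; J'] /\ J != J' /\ [disjoint J & J'] /\
         (2 * #|J| = m)%N /\ (2 * #|J'| = m)%N).
Proof.
have hmax : forall J K, J \in S -> K \in S -> J != K ->
    (#|J :&: K| <= max_inter S)%N.
  move=> J K hJ hK hJK; rewrite /max_inter.
  apply: leq_trans (leq_bigmax_cond _ hJ).
  by apply: (leq_bigmax_cond (F := fun J' => #|J :&: J'|)); rewrite hK eq_sym hJK.
have [K0 hK0] : exists K0, K0 \in S.
  by apply/set0Pn; rewrite -card_gt0 hcard; lia.
split.
  case: (posnP m) => [m0|mpos].
    have -> : m%:R = 0 :> rat by rewrite m0.
    by rewrite invr0 mulr0 ler0n.
  rewrite ler_pdivrMr ?ltr0n // -natrM ler_nat leqNgt; apply/negP => hlt.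
  have hneg : forall J K, J \in S -> K \in S -> J != K ->
      dot (wv l J) (wv l K) < 0.
    move=> J K hJ hK hJK; rewrite (dot_w (hsize _ hJ) (hsize _ hK)) pmulr_rlt0 ?ltr0n //.
    rewrite subr_lt0 -natrM ltr_nat.
    have := hmax J K hJ hK hJK; nia.
  pose D1 := (const_mx 1 : 'M[rat]_(1, m)).
  have hr : \rank D1^T = 1%N.
    rewrite mxrank_tr; apply/eqP; apply: rowfree_of => a ha.
    have : a 0 0 = 0.
      transitivity ((a *m D1) 0 (Ordinal mpos)); last by rewrite ha mxE.
      by rewrite mxE big_ord1 mxE mulr1.
    by move=> h; apply/rowP => i; rewrite ord1 h mxE.
  have := @core_count _ m (S :\ K0) (wv l) (- wv l K0) _ D1^T.
  rewrite hr.
  have -> // : (#|S :\ K0| + 1 <= m)%N = false.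
    have := cardsD1 K0 S; rewrite hK0 hcard; lia.
  move=> H; suff : false by []; apply: H.
  - by move=> i j /setD1P [_ hi] /setD1P [_ hj] hij; apply: ltW; apply: hneg.
  - move=> i /setD1P [hi1 hi]; rewrite dotNl oppr_gt0; apply: hneg => //.
    by rewrite eq_sym.
  - move=> i /setD1P [_ hi]; apply/rowP => k; rewrite ord1 !mxE.
    under eq_bigr do rewrite !mxE mulr1.
    move: (sum_w (hsize _ hi)); rewrite /wv => h; rewrite -[RHS]h; apply: eq_bigr => j _; by rewrite mxE.
move=> hn heq.
have m3 : (2 < m)%N by lia.
have mpos : (0 < m)%N by lia.
have heqn : (max_inter S * m = l ^ 2)%N.
  apply/eqP; rewrite -(eqr_nat rat) natrM heq divfK //.
  by rewrite pnatr_eq0 -lt0n.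
have hle : forall J K, J \in S -> K \in S -> J != K ->
    dot (wv l J) (wv l K) <= 0.
  move=> J K hJ hK hJK; rewrite (dot_w (hsize _ hJ) (hsize _ hK)).
  rewrite pmulr_rle0 ?ltr0n // subr_le0 -natrM ler_nat.
  have := hmax J K hJ hK hJK; nia.
have hSgt1 : (1 < #|S|)%N by lia.
have hl0 : (0 < l)%N.
  rewrite lt0n; apply/negP => /eqP l0.
  have : S \subset [set set0].
    by apply/subsetP => J hJ; rewrite inE -cards_eq0 hsize // l0.
  by move/subset_leq_card; rewrite cards1; lia.
have hlm : (l < m)%N.
  rewrite ltn_neqAle; apply/andP; split; last first.
    by rewrite -(hsize _ hK0); apply: leq_trans (max_card _) _; rewrite card_ord.
  apply/negP => /eqP lm.
  have : S \subset [set setT].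
    apply/subsetP => J hJ; rewrite inE eqEcard subsetT cardsT card_ord.
    by rewrite (hsize _ hJ) lm leqnn.
  by move/subset_leq_card; rewrite cards1; lia.
have hlmR : (l%:R : rat) < m%:R by rewrite ltr_nat.
have hl0R : (0 : rat) < l%:R by rewrite ltr0n.
have hcomp : forall J1, J1 \in S -> ~: J1 \in S /\ (2 * l = m)%N.
  move=> J1 h1.
  set w1 := wv l J1.
  set al := dot w1 w1.
  have hal : 0 < al.
    rewrite /al /w1 (dot_w (hsize _ h1) (hsize _ h1)) setIid (hsize _ h1).
    rewrite pmulr_rgt0 ?ltr0n // subr_gt0 -natrM ltr_nat; nia.
  pose u J := al *: wv l J - dot (wv l J) w1 *: w1.
  have [j1 hj1] : exists j1, j1 \in J1.
    by apply/set0Pn; rewrite -card_gt0 hsize.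
  have [j2 hj2] : exists j2, j2 \notin J1.
    have : (0 < #|~: J1|)%N.
      have := cardsC J1; rewrite card_ord hsize //; lia.
    by case/card_gt0P => j2; rewrite inE => ?; exists j2.
  pose D2 := \matrix_(i < 2, j < m) (if i == 0 then 1 else w1 0 j).
  have hrank : \rank D2^T = 2%N.
    rewrite mxrank_tr; apply/eqP; apply: rowfree_of => a ha.
    have he : forall j, a 0 0 + a 0 1 * w1 0 j = 0.
      move=> j; transitivity ((a *m D2) 0 j); last by rewrite ha mxE.
      rewrite [RHS]mxE big_ord_recl big_ord1 !mxE /= mulr1. by congr (a 0 _ + a 0 _ * _); apply: val_inj.
    have e1 := he j1; have e2 := he j2.
    rewrite /w1 !mxE hj1 (negbTE hj2) /= in e1 e2.
    have a1 : a 0 1 = 0 by nra.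
    have a0 : a 0 0 = 0 by nra.
    apply/rowP => i; rewrite mxE.
    by case: i => [[|[|i]] hi] //; [rewrite -a0 | rewrite -a1]; congr (a 0 _); apply: val_inj.
  have hu0 : forall J, J \in S -> u J *m D2^T = 0.
    move=> J hJ; apply/rowP => i; rewrite [LHS]mxE [RHS]mxE.
    have hD : forall j, D2^T j i = if i == 0 then 1 else w1 0 j.
      by move=> j; rewrite mxE [D2 i j]mxE.
    under eq_bigr do rewrite hD.
    case: eqP => _.
      under eq_bigr do rewrite mulr1.
      rewrite /u sumvB !sumvZ /w1 (sum_w (hsize _ hJ)) (sum_w (hsize _ h1)).
      by rewrite !mulr0 subr0.
    rewrite -/(dot (u J) w1) /u dotBl !dotZl /al; ring.
  have hex : [exists J in S :\ J1, u J == 0].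
    apply: contraT => hn0.
    have hnz : forall J, J \in S :\ J1 -> u J != 0.
      move=> J hJ; apply/negP => /eqP hz; move/negP: hn0; apply.
      by apply/existsP; exists J; rewrite hJ hz eqxx.
    have := @bound2 _ m (S :\ J1) u _ D2^T hnz.
    rewrite hrank.
    have hc : #|S :\ J1| = (#|S| - 1)%N by have := cardsD1 J1 S; rewrite h1; lia.
    have -> : (#|S :\ J1| + 2 * 2 <= 2 * m)%N = false by rewrite hc; lia.
    move=> H; apply: H.
    - move=> J K /setD1P [hJ1 hJ] /setD1P [hK1 hK] hJK.
      rewrite /u dot_proj.
      have p1 := hle J J1 hJ h1 hJ1.
      have p2 := hle K J1 hK h1 hK1.
      have p3 := hle J K hJ hK hJK.
      rewrite -/w1 -/al in p1 p2 *.
      apply: mulr_ge0_le0; first exact: ltW.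
      rewrite subr_le0; apply: (@le_trans _ _ 0).
        by apply: mulr_ge0_le0 => //; apply: ltW.
      exact: mulr_le0.
    - by move=> J /setD1P [_ hJ]; apply: hu0.
  case/existsP: hex => J /andP [/setD1P [hJ1 hJ] /eqP hz].
  have p := hle J J1 hJ h1 hJ1.
  set pJ := dot (wv l J) w1 in hz p.
  have he : forall j, al * (wv l J) 0 j = pJ * w1 0 j.
    move=> j; apply/eqP; rewrite -subr_eq0; apply/eqP.
    by have := congr1 (fun M : 'rV[rat]_m => M 0 j) hz; rewrite !mxE.
  have hJc : J = ~: J1.
    apply/setP => x; rewrite inE; have := he x; rewrite /w1 !mxE.
    case: (x \in J1); case: (x \in J) => //= h; exfalso.
      rewrite ?mulr1 in h; exact: (key1 hal p hlmR h).
    rewrite ?mulr0 ?sub0r in h; exact: (key2 hal p hl0R h).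
  split; first by rewrite -hJc.
  have := cardsC J1; rewrite -hJc (hsize _ hJ) (hsize _ h1) card_ord; lia.
have h2l : (2 * l = m)%N := (hcomp K0 hK0).2.
have hne : forall J : {set 'I_m}, J != ~: J.
  move=> J; apply/negP => /eqP h.
  have := congr1 (fun A : {set 'I_m} => Ordinal mpos \in A) h.
  by rewrite /= inE; case: (_ \in J).
have hpair : forall J X : {set 'I_m}, X \in [set J; ~: J] ->
    [set J; ~: J] = [set X; ~: X].
  move=> J X; rewrite !inE => /orP [] /eqP -> //.
  by rewrite setCK setUC.
pose P := [set [set J; ~: J] | J in S].
have hP : partition P S.
  apply/and3P; split.
  - apply/eqP/setP => X; rewrite /cover; apply/bigcupP/idP.
      case=> B /imsetP [J hJ ->]; rewrite !inE => /orP [] /eqP -> //.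
      exact: (hcomp J hJ).1.
    move=> hX; exists [set X; ~: X]; first exact: imset_f.
    by rewrite !inE eqxx.
  - apply/trivIsetP => B1 B2 /imsetP [J hJ ->] /imsetP [K hK ->] hneq.
    rewrite -setI_eq0; apply/negPn/negP => /set0Pn [X]; rewrite inE => /andP [e1 e2].
    by move: hneq; rewrite (hpair _ _ e1) (hpair _ _ e2) eqxx.
  - apply/negP => /imsetP [J hJ] h.
    have : J \in [set J; ~: J] by rewrite !inE eqxx.
    by rewrite -h inE.
exists P; split; first exact: hP.
split.
  have := card_partition hP.
  have -> : (\sum_(B in P) #|B| = \sum_(B in P) 2)%N.
    by apply: eq_bigr => B /imsetP [J _ ->]; rewrite cards2 hne.
  rewrite sum_nat_const hcard. move=> h; have : (#|P| * 2 = (m - 1) * 2)%N by rewrite -h hn mulnC.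
  by move/eqP; rewrite eqn_mul2r /= => /eqP.
move=> p /imsetP [J hJ ->]; exists J, (~: J); split; first done.
split; first exact: hne.
split; first by rewrite -setI_eq0 setICr.
split; first by rewrite (hsize _ hJ).
have := cardsC J; rewrite (hsize _ hJ) card_ord; lia.
Qed.
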